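(* Consider the twisted associative algebra generated by an element $\Delta$ of arity $0$ and homological degree $1$, an element $\mathsf m$ of arity $1$ and homological degree $0$, and an element $\mathsf l$ of arity $1$ and homological degree $1$, subject to the relations \[ \Delta^2=0,\quad [\mathsf m_{\{1\}},\mathsf m_{\{2\}}]=0,\quad [\Delta,\mathsf m_{\{1\}}]=\mathsf l_{\{1\}},\quad [\Delta,\mathsf l_{\{1\}}]=0,\quad [\mathsf l_{\{1\}},\mathsf m_{\{2\}}]=0,\quad [\mathsf l_{\{1\}},\mathsf l_{\{2\}}]=0. \] This twisted associative algebra is isomorphic to $\mathrm{tBV}$, the twisted associative algebra generated by $\Delta$ (arity $0$, degree $1$) and $\mathsf m$ (arity $1$, degree $0$) subject to $\Delta^2=0$, $[\mathsf m_{\{1\}},\mathsf m_{\{2\}}]=0$ and $[[\Delta,\mathsf m_{\{1\}}],\mathsf m_{\{2\}}]=0$.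
   Context: Work over a field $\Bbbk$ of characteristic zero, homologically graded vector spaces with the Koszul sign rule. A twisted associative algebra is a species $\mathcal A$ (functor from finite sets with bijections to graded vector spaces) with natural, associative, unital products $\mathcal A(J)\otimes\mathcal A(K)\to\mathcal A(J\sqcup K)$ for disjoint $J,K$; elements of $\mathcal A(I)$ have arity $|I|$. $[\mathsf x,\mathsf y]=\mathsf x\mathsf y-(-1)^{|\mathsf x||\mathsf y|}\mathsf y\mathsf x$. For an arity-one element $\mathsf x$, $\mathsf x_{\{i\}}$ is its relabeling to $\{i\}$. Relations are imposed together with all relabelings. *)

(* Defs.v *)
From HB Require Import structures.
From mathcomp Require Import all_boot all_order all_algebra.
Set Implicit Arguments. Unset Strict Implicit. Unset Printing Implicit Defensive.
Import Order.TTheory GRing.Theory Num.Theory.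
Local Open Scope ring_scope.

Definition sumf (I I' J J' : Type) (f : I -> I') (g : J -> J') (s : I + J) : I' + J' :=
  match s with inl x => inl (f x) | inr y => inr (g y) end.
Definition sum_assoc (I J L : Type) (s : (I + J) + L) : I + (J + L) :=
  match s with
  | inl (inl x) => inl x | inl (inr y) => inr (inl y) | inr z => inr (inr z) end.
Definition sum_swap (I J : Type) (s : I + J) : J + I :=
  match s with inl x => inr x | inr y => inl y end.
Definition void_l (I : Type) (s : void + I) : I :=
  match s with inl v => match v with end | inr x => x end.
Definition void_r (I : Type) (s : I + void) : I :=
  match s with inl x => x | inr v => match v with end end.

(* A twisted associative algebra over K, in (Z-)graded vector spaces.
   taa_sp I d is the homogeneous component of homological degree d of A(I),
   for a finite set I (a finType); taa_rel f is the action of a bijection f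
   (the species functoriality); taa_mul is the product
   A(J) (x) A(K) -> A(J |_| K), J |_| K modelled as the sum type J + K. *)
Record TAA (K : fieldType) := {
  taa_sp : finType -> int -> lmodType K;
  taa_rel : forall (I J : finType) (d : int), (I -> J) -> taa_sp I d -> taa_sp J d;
  taa_mul : forall (I J : finType) (d e : int),
      taa_sp I d -> taa_sp J e -> taa_sp (I + J)%type (d + e);
  taa_one : taa_sp void 0
}.

Arguments taa_rel {K} _ {I J d} _ _.
Arguments taa_mul {K} _ {I J d e} _ _.
Arguments taa_one {K} _.

Definition dcast (K : fieldType) (A : TAA K) (I : finType) (d d' : int)
  (H : d = d') (x : taa_sp A I d) : taa_sp A I d' :=
  eq_rect d (taa_sp A I) x d' H.

Definition is_TAA (K : fieldType) (A : TAA K) : Prop :=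
  (forall (I J : finType) d (f : I -> J), bijective f ->
     forall (a : K) (x y : taa_sp A I d),
       taa_rel A f (a *: x + y) = a *: taa_rel A f x + taa_rel A f y) /\
  (forall (I : finType) d (x : taa_sp A I d), taa_rel A id x = x) /\
  (forall (I J L : finType) d (f : I -> J) (g : J -> L), bijective f -> bijective g ->
     forall x : taa_sp A I d, taa_rel A (g \o f) x = taa_rel A g (taa_rel A f x)) /\
  (forall (I J : finType) d e (a : K) (x x' : taa_sp A I d) (y : taa_sp A J e),
     taa_mul A (a *: x + x') y = a *: taa_mul A x y + taa_mul A x' y) /\
  (forall (I J : finType) d e (a : K) (x : taa_sp A I d) (y y' : taa_sp A J e),
     taa_mul A x (a *: y + y') = a *: taa_mul A x y + taa_mul A x y') /\
  (forall (I I' J J' : finType) d e (f : I -> I') (g : J -> J'),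
     bijective f -> bijective g ->
     forall (x : taa_sp A I d) (y : taa_sp A J e),
       taa_mul A (taa_rel A f x) (taa_rel A g y) = taa_rel A (sumf f g) (taa_mul A x y)) /\
  (forall (I J L : finType) d e g (x : taa_sp A I d) (y : taa_sp A J e) (z : taa_sp A L g),
     taa_rel A (@sum_assoc I J L) (taa_mul A (taa_mul A x y) z)
     = dcast (addrA d e g) (taa_mul A x (taa_mul A y z))) /\
  (forall (I : finType) d (x : taa_sp A I d),
     dcast (add0r d) (taa_rel A (@void_l I) (taa_mul A (taa_one A) x)) = x) /\
  (forall (I : finType) d (x : taa_sp A I d),
     dcast (addr0 d) (taa_rel A (@void_r I) (taa_mul A x (taa_one A))) = x).

(* graded commutator [x,y] = x y - (-1)^{|x||y|} y x, where y x in A(K |_| J)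
   is relabelled to A(J |_| K) *)
Definition tcomm (K : fieldType) (A : TAA K) (I J : finType) (d e : int)
  (x : taa_sp A I d) (y : taa_sp A J e) : taa_sp A (I + J)%type (d + e) :=
  taa_mul A x y
  - (-1) ^+ absz (d * e) *: taa_rel A (@sum_swap J I) (dcast (addrC e d) (taa_mul A y x)).

Definition is_TAA_morphism (K : fieldType) (A B : TAA K)
  (phi : forall (I : finType) (d : int), taa_sp A I d -> taa_sp B I d) : Prop :=
  (forall (I : finType) d (a : K) (x y : taa_sp A I d),
     phi I d (a *: x + y) = a *: phi I d x + phi I d y) /\
  (forall (I J : finType) d (f : I -> J), bijective f ->
     forall x : taa_sp A I d, phi J d (taa_rel A f x) = taa_rel B f (phi I d x)) /\
  (forall (I J : finType) d e (x : taa_sp A I d) (y : taa_sp A J e),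
     phi _ _ (taa_mul A x y) = taa_mul B (phi I d x) (phi J e y)) /\
  phi void 0 (taa_one A) = taa_one B.

Definition TAA_isomorphic (K : fieldType) (A B : TAA K) : Prop :=
  exists (phi : forall I d, taa_sp A I d -> taa_sp B I d)
         (psi : forall I d, taa_sp B I d -> taa_sp A I d),
    is_TAA_morphism phi /\ is_TAA_morphism psi /\
    (forall I d (x : taa_sp A I d), psi I d (phi I d x) = x) /\
    (forall I d (y : taa_sp B I d), phi I d (psi I d y) = y).

(* Arity-zero generators live in A(void) (the empty set), arity-one
   generators in A(unit) (a one-element set).  A relation between relabelled
   copies x_{1}, y_{2} is imposed in A(unit + unit) (= A({1} |_| {2}) up to
   relabelling; by naturality all relabellings are then imposed). *)

Definition rels1 (K : fieldType) (A : TAA K)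
  (D : taa_sp A void 1) (m : taa_sp A unit 0) (l : taa_sp A unit 1) : Prop :=
  taa_mul A D D = 0 /\
  tcomm m m = 0 /\
  tcomm D m = taa_rel A (@inr void unit) l /\
  tcomm D l = 0 /\
  tcomm l m = 0 /\
  tcomm l l = 0.

Definition relsBV (K : fieldType) (A : TAA K)
  (D : taa_sp A void 1) (m : taa_sp A unit 0) : Prop :=
  [/\ taa_mul A D D = 0,
      tcomm m m = 0
    & tcomm (tcomm D m) m = 0].

Definition presented1 (K : fieldType) (A : TAA K)
  (D : taa_sp A void 1) (m : taa_sp A unit 0) (l : taa_sp A unit 1) : Prop :=
  is_TAA A /\ rels1 D m l /\
  forall (B : TAA K) (D' : taa_sp B void 1) (m' : taa_sp B unit 0) (l' : taa_sp B unit 1),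
    is_TAA B -> rels1 D' m' l' ->
    exists phi : forall I d, taa_sp A I d -> taa_sp B I d,
      [/\ is_TAA_morphism phi, phi _ _ D = D', phi _ _ m = m', phi _ _ l = l' &
        forall psi : forall I d, taa_sp A I d -> taa_sp B I d,
          is_TAA_morphism psi -> psi _ _ D = D' -> psi _ _ m = m' -> psi _ _ l = l' ->
          forall I d (x : taa_sp A I d), psi I d x = phi I d x].

Definition presentedBV (K : fieldType) (A : TAA K)
  (D : taa_sp A void 1) (m : taa_sp A unit 0) : Prop :=
  is_TAA A /\ relsBV D m /\
  forall (B : TAA K) (D' : taa_sp B void 1) (m' : taa_sp B unit 0),
    is_TAA B -> relsBV D' m' ->
    exists phi : forall I d, taa_sp A I d -> taa_sp B I d,
      [/\ is_TAA_morphism phi, phi _ _ D = D', phi _ _ m = m' &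
        forall psi : forall I d, taa_sp A I d -> taa_sp B I d,
          is_TAA_morphism psi -> psi _ _ D = D' -> psi _ _ m = m' ->
          forall I d (x : taa_sp A I d), psi I d x = phi I d x].

(* Main.v *)
Require Import Defs.
From HB Require Import structures.
From mathcomp Require Import all_boot all_order all_algebra.
From Stdlib Require Import FunctionalExtensionality.
Set Implicit Arguments. Unset Strict Implicit. Unset Printing Implicit Defensive.
Import GRing.Theory.
Local Open Scope ring_scope.

Definition sum_assoc_inv (I J L : Type) (s : I + (J + L)) : (I + J) + L :=
  match s with
  | inl x => inl (inl x) | inr (inl y) => inl (inr y) | inr (inr z) => inr z end.

Lemma bij_id' (T : Type) : bijective (@id T).
Proof. by exists id. Qed.
Lemma bij_sumf (I I' J J' : Type) (f : I -> I') (g : J -> J') :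
  bijective f -> bijective g -> bijective (sumf f g).
Proof.
case=> f' f1 f2 [g' g1 g2]; exists (sumf f' g').
- by case=> x /=; rewrite ?f1 ?g1.
- by case=> x /=; rewrite ?f2 ?g2.
Qed.
Lemma bij_sa (I J L : Type) : bijective (@sum_assoc I J L).
Proof. by exists (@sum_assoc_inv I J L); [case=> [[]|]|case=> [|[]]]. Qed.
Lemma bij_sai (I J L : Type) : bijective (@sum_assoc_inv I J L).
Proof. by exists (@sum_assoc I J L); [case=> [|[]]|case=> [[]|]]. Qed.
Lemma bij_swap (I J : Type) : bijective (@sum_swap I J).
Proof. by exists (@sum_swap J I); case. Qed.
Lemma bij_vl (I : Type) : bijective (@void_l I).
Proof. by exists inr; [case=> [[]|]|]. Qed.
Lemma bij_vr (I : Type) : bijective (@void_r I).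
Proof. by exists inl; [case=> [|[]]|]. Qed.
Lemma bij_inr (I : Type) : bijective (@inr void I).
Proof. by exists (@void_l I); [|case=> [[]|]]. Qed.
Lemma bij_inl (I : Type) : bijective (@inl I void).
Proof. by exists (@void_r I); [|case=> [|[]]]. Qed.

Ltac bijstep := match goal with
  | |- bijective (_ \o _) => apply: bij_comp
  | |- bijective (sumf _ _) => apply: bij_sumf
  | |- bijective id => exact: bij_id'
  | |- bijective (@sum_assoc _ _ _) => exact: bij_sa
  | |- bijective (@sum_assoc_inv _ _ _) => exact: bij_sai
  | |- bijective (@sum_swap _ _) => exact: bij_swap
  | |- bijective (@void_l _) => exact: bij_vl
  | |- bijective (@void_r _) => exact: bij_vr
  | |- bijective inr => exact: bij_inr
  | |- bijective inl => exact: bij_inl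
  | |- bijective _ => assumption
  end.
Ltac bijtac := match goal with |- bijective _ => solve [repeat bijstep] end.

Lemma dcastE (K : fieldType) (A : TAA K) I d (H : d = d) (x : taa_sp A I d) :
  dcast H x = x.
Proof. by rewrite /dcast (eq_irrelevance H erefl). Qed.

Lemma xx0 (V : zmodType) (x : V) : x = x + x -> x = 0.
Proof. move=> h; have: x + x - x = x - x by rewrite -h. by rewrite addrK subrr. Qed.

Lemma dcast0 (K : fieldType) (A : TAA K) I d d' (H : d = d') :
  dcast H (0 : taa_sp A I d) = 0.
Proof. by case: d' / H. Qed.

Section Basic.
Variables (K : fieldType) (A : TAA K) (HA : is_TAA A).
Local Notation rel := (taa_rel A).
Local Notation mul := (taa_mul A).

Lemma relL (I J : finType) d (f : I -> J) : bijective f ->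
  forall (a : K) (x y : taa_sp A I d), rel f (a *: x + y) = a *: rel f x + rel f y.
Proof. by case: HA => H _; apply: H. Qed.
Lemma rel_id (I : finType) d (x : taa_sp A I d) : rel id x = x.
Proof. by case: HA => _ [H _]; apply: H. Qed.
Lemma rel_comp (I J L : finType) d (f : I -> J) (g : J -> L) (x : taa_sp A I d) :
  bijective f -> bijective g -> rel g (rel f x) = rel (g \o f) x.
Proof. by case: HA => _ [_ [H _]] bf bg; rewrite H. Qed.
Lemma rel_ext (I J : finType) d (f g : I -> J) (x : taa_sp A I d) :
  f =1 g -> rel f x = rel g x.
Proof. by move=> fg; rewrite (functional_extensionality _ _ fg). Qed.
Lemma tmulLl (I J : finType) d e (a : K) (x x' : taa_sp A I d) (y : taa_sp A J e) :
  mul (a *: x + x') y = a *: mul x y + mul x' y.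
Proof. by case: HA => _ [_ [_ [H _]]]. Qed.
Lemma tmulLr (I J : finType) d e (a : K) (x : taa_sp A I d) (y y' : taa_sp A J e) :
  mul x (a *: y + y') = a *: mul x y + mul x y'.
Proof. by case: HA => _ [_ [_ [_ [H _]]]]. Qed.
Lemma mul_rel (I I' J J' : finType) d e (f : I -> I') (g : J -> J')
  (x : taa_sp A I d) (y : taa_sp A J e) : bijective f -> bijective g ->
  mul (rel f x) (rel g y) = rel (sumf f g) (mul x y).
Proof. by case: HA => _ [_ [_ [_ [_ [H _]]]]] bf bg; rewrite H. Qed.
Lemma assoc (I J L : finType) d e g (x : taa_sp A I d) (y : taa_sp A J e) (z : taa_sp A L g) :
  rel (@sum_assoc I J L) (mul (mul x y) z) = dcast (addrA d e g) (mul x (mul y z)).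
Proof. by case: HA => _ [_ [_ [_ [_ [_ [H _]]]]]]. Qed.

Lemma rel0 (I J : finType) d (f : I -> J) : bijective f -> rel f (0 : taa_sp A I d) = 0.
Proof.
move=> bf; have := @relL _ _ d f bf 1 0 0; by rewrite !scale1r !addr0 => /xx0.
Qed.
Lemma relD (I J : finType) d (f : I -> J) (x y : taa_sp A I d) : bijective f ->
  rel f (x + y) = rel f x + rel f y.
Proof. by move=> bf; rewrite -[x]scale1r relL // !scale1r. Qed.
Lemma relZ (I J : finType) d (f : I -> J) a (x : taa_sp A I d) : bijective f ->
  rel f (a *: x) = a *: rel f x.
Proof. by move=> bf; rewrite -[a *: x]addr0 relL // rel0 // addr0. Qed.
Lemma relN (I J : finType) d (f : I -> J) (x : taa_sp A I d) : bijective f ->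
  rel f (- x) = - rel f x.
Proof. by move=> bf; rewrite -scaleN1r relZ // scaleN1r. Qed.
Lemma relB (I J : finType) d (f : I -> J) (x y : taa_sp A I d) : bijective f ->
  rel f (x - y) = rel f x - rel f y.
Proof. by move=> bf; rewrite relD // relN. Qed.

Lemma tmul0l (I J : finType) d e (y : taa_sp A J e) : mul (0 : taa_sp A I d) y = 0.
Proof.
have := tmulLl 1 (0 : taa_sp A I d) 0 y; by rewrite !scale1r !addr0 => /xx0.
Qed.
Lemma tmul0r (I J : finType) d e (x : taa_sp A I d) : mul x (0 : taa_sp A J e) = 0.
Proof.
have := tmulLr 1 x (0 : taa_sp A J e) 0; by rewrite !scale1r !addr0 => /xx0.
Qed.
Lemma tmulDl (I J : finType) d e (x x' : taa_sp A I d) (y : taa_sp A J e) :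
  mul (x + x') y = mul x y + mul x' y.
Proof. by rewrite -[x]scale1r tmulLl !scale1r. Qed.
Lemma tmulDr (I J : finType) d e (x : taa_sp A I d) (y y' : taa_sp A J e) :
  mul x (y + y') = mul x y + mul x y'.
Proof. by rewrite -[y]scale1r tmulLr !scale1r. Qed.
Lemma tmulZl (I J : finType) d e a (x : taa_sp A I d) (y : taa_sp A J e) :
  mul (a *: x) y = a *: mul x y.
Proof. by rewrite -[a *: x]addr0 tmulLl tmul0l addr0. Qed.
Lemma tmulZr (I J : finType) d e a (x : taa_sp A I d) (y : taa_sp A J e) :
  mul x (a *: y) = a *: mul x y.
Proof. by rewrite -[a *: y]addr0 tmulLr tmul0r addr0. Qed.
Lemma tmulNl (I J : finType) d e (x : taa_sp A I d) (y : taa_sp A J e) :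
  mul (- x) y = - mul x y.
Proof. by rewrite -scaleN1r tmulZl scaleN1r. Qed.
Lemma tmulNr (I J : finType) d e (x : taa_sp A I d) (y : taa_sp A J e) :
  mul x (- y) = - mul x y.
Proof. by rewrite -scaleN1r tmulZr scaleN1r. Qed.
Lemma tmulBl (I J : finType) d e (x x' : taa_sp A I d) (y : taa_sp A J e) :
  mul (x - x') y = mul x y - mul x' y.
Proof. by rewrite tmulDl tmulNl. Qed.
Lemma tmulBr (I J : finType) d e (x : taa_sp A I d) (y y' : taa_sp A J e) :
  mul x (y - y') = mul x y - mul x y'.
Proof. by rewrite tmulDr tmulNr. Qed.

Lemma mul_rel_l (I I' J : finType) d e (f : I -> I') (x : taa_sp A I d) (y : taa_sp A J e) :
  bijective f -> mul (rel f x) y = rel (sumf f id) (mul x y).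
Proof. by move=> bf; rewrite -{1}[y]rel_id mul_rel //; bijtac. Qed.
Lemma mul_rel_r (I J J' : finType) d e (g : J -> J') (x : taa_sp A I d) (y : taa_sp A J e) :
  bijective g -> mul x (rel g y) = rel (sumf id g) (mul x y).
Proof. by move=> bg; rewrite -{1}[x]rel_id mul_rel //; bijtac. Qed.

Lemma rel_dcast (I J : finType) d d' (H : d = d') (f : I -> J) (x : taa_sp A I d) :
  rel f (dcast H x) = dcast H (rel f x).
Proof. by case: d' / H. Qed.

Lemma assocR (I J L : finType) d e g (x : taa_sp A I d) (y : taa_sp A J e) (z : taa_sp A L g) :
  mul x (mul y z) = dcast (esym (addrA d e g)) (rel (@sum_assoc I J L) (mul (mul x y) z)).
Proof. by rewrite assoc; case: _ / (addrA d e g). Qed.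
Lemma assocL (I J L : finType) d e g (x : taa_sp A I d) (y : taa_sp A J e) (z : taa_sp A L g) :
  mul (mul x y) z = rel (@sum_assoc_inv I J L) (dcast (addrA d e g) (mul x (mul y z))).
Proof.
rewrite -assoc rel_comp; try bijtac.
by rewrite (@rel_ext _ _ _ _ id) ?rel_id //; case=> [[]|].
Qed.

Lemma tcomm_ev (I J : finType) d e (x : taa_sp A I d) (y : taa_sp A J e) :
  ~~ odd (absz (d * e)) ->
  tcomm x y = mul x y - rel (@sum_swap J I) (dcast (addrC e d) (mul y x)).
Proof. by move=> h; rewrite /tcomm -signr_odd (negbTE h) expr0 scale1r. Qed.
Lemma tcomm_od (I J : finType) d e (x : taa_sp A I d) (y : taa_sp A J e) :
  odd (absz (d * e)) ->
  tcomm x y = mul x y + rel (@sum_swap J I) (dcast (addrC e d) (mul y x)).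
Proof. by move=> h; rewrite /tcomm -signr_odd h expr1 scaleN1r opprK. Qed.

Lemma tcomm_rel_l (I I' J : finType) d e (f : I -> I') (x : taa_sp A I d) (y : taa_sp A J e) :
  bijective f -> tcomm (rel f x) y = rel (sumf f id) (tcomm x y).
Proof.
move=> bf; rewrite /tcomm relB ?relZ; try bijtac.
rewrite mul_rel_l // mul_rel_r // -rel_dcast rel_comp -?rel_dcast ?rel_comp; try bijtac.
by congr (_ - _ *: _); apply: rel_ext; case.
Qed.

End Basic.

Ltac nstep HB := match goal with
 | |- context [taa_mul _ (?x - ?x') ?y] => rewrite (@tmulBl _ _ HB _ _ _ _ x x' y)
 | |- context [taa_mul _ ?x (?y - ?y')] => rewrite (@tmulBr _ _ HB _ _ _ _ x y y')
 | |- context [taa_mul _ (?x + ?x') ?y] => rewrite (@tmulDl _ _ HB _ _ _ _ x x' y)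
 | |- context [taa_mul _ ?x (?y + ?y')] => rewrite (@tmulDr _ _ HB _ _ _ _ x y y')
 | |- context [taa_mul _ (- ?x) ?y] => rewrite (@tmulNl _ _ HB _ _ _ _ x y)
 | |- context [taa_mul _ ?x (- ?y)] => rewrite (@tmulNr _ _ HB _ _ _ _ x y)
 | |- context [@dcast ?K ?A ?I ?d ?d' ?H 0] => rewrite (@dcast0 K A I d d' H)
 | |- context [@taa_mul _ _ ?I ?J ?d ?e 0 ?y] => rewrite (@tmul0l _ _ HB I J d e y)
 | |- context [@taa_mul _ _ ?I ?J ?d ?e ?x 0] => rewrite (@tmul0r _ _ HB I J d e x)
 | |- context [taa_rel _ ?f (?x - ?y)] =>
     rewrite (@relB _ _ HB _ _ _ f x y ltac:(bijtac))
 | |- context [taa_rel _ ?f (?x + ?y)] =>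
     rewrite (@relD _ _ HB _ _ _ f x y ltac:(bijtac))
 | |- context [taa_rel _ ?f (- ?x)] =>
     rewrite (@relN _ _ HB _ _ _ f x ltac:(bijtac))
 | |- context [@taa_rel _ _ ?I ?J ?d ?f 0] =>
     rewrite (@rel0 _ _ HB I J d f ltac:(bijtac))
 | |- context [taa_mul _ (taa_rel _ ?f ?x) ?y] =>
     rewrite (@mul_rel_l _ _ HB _ _ _ _ _ f x y ltac:(bijtac))
 | |- context [taa_mul _ ?x (taa_rel _ ?g ?y)] =>
     rewrite (@mul_rel_r _ _ HB _ _ _ _ _ g x y ltac:(bijtac))
 | |- context [taa_mul _ ?x (taa_mul _ ?y ?z)] =>
     rewrite (@assocR _ _ HB _ _ _ _ _ _ x y z) dcastE
 | |- context [taa_rel _ ?g (taa_rel _ ?f ?x)] =>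
     rewrite (@rel_comp _ _ HB _ _ _ _ f g x ltac:(bijtac) ltac:(bijtac))
 end.
Ltac norm HB := repeat nstep HB.

Ltac merge_rel := repeat match goal with
 |- context [taa_rel ?A ?f ?x] => match goal with |- context [taa_rel A ?g x] =>
     tryif constr_eq f g then fail else
     (rewrite (@rel_ext _ A _ _ _ f g x); last by repeat case) end end.

Section Morph.
Variables (K : fieldType) (A B : TAA K).
Variable phi : forall I d, taa_sp A I d -> taa_sp B I d.
Hypothesis Hphi : is_TAA_morphism phi.

Lemma phiL I d (a : K) (x y : taa_sp A I d) : phi (a *: x + y) = a *: phi x + phi y.
Proof. by case: Hphi => H _; apply: H. Qed.
Lemma phi_rel (I J : finType) d (f : I -> J) (x : taa_sp A I d) : bijective f ->
  phi (taa_rel A f x) = taa_rel B f (phi x).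
Proof. by case: Hphi => _ [H _] bf; apply: H. Qed.
Lemma phi_mul (I J : finType) d e (x : taa_sp A I d) (y : taa_sp A J e) :
  phi (taa_mul A x y) = taa_mul B (phi x) (phi y).
Proof. by case: Hphi => _ [_ [H _]]; apply: H. Qed.
Lemma phi_one : phi (taa_one A) = taa_one B.
Proof. by case: Hphi => _ [_ [_ H]]. Qed.
Lemma phi0 I d : phi (0 : taa_sp A I d) = 0.
Proof. have := phiL 1 (0 : taa_sp A I d) 0. rewrite !scale1r !addr0. move/xx0. done. Qed.
Lemma phiZ I d a (x : taa_sp A I d) : phi (a *: x) = a *: phi x.
Proof. by rewrite -[a *: x]addr0 phiL phi0 addr0. Qed.
Lemma phiD I d (x y : taa_sp A I d) : phi (x + y) = phi x + phi y.
Proof. by rewrite -{1}[x]scale1r phiL scale1r. Qed.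
Lemma phiB I d (x y : taa_sp A I d) : phi (x - y) = phi x - phi y.
Proof. by rewrite phiD -scaleN1r phiZ scaleN1r. Qed.
Lemma phi_dcast I d d' (H : d = d') (x : taa_sp A I d) : phi (dcast H x) = dcast H (phi x).
Proof. by case: d' / H. Qed.
Lemma phi_tcomm (I J : finType) d e (x : taa_sp A I d) (y : taa_sp A J e) :
  phi (tcomm x y) = tcomm (phi x) (phi y).
Proof.
by rewrite /tcomm phiB phiZ phi_rel ?phi_dcast ?phi_mul //; bijtac.
Qed.
End Morph.

Lemma morph_comp (K : fieldType) (A B C : TAA K)
  (phi : forall I d, taa_sp A I d -> taa_sp B I d)
  (psi : forall I d, taa_sp B I d -> taa_sp C I d) :
  is_TAA_morphism phi -> is_TAA_morphism psi ->
  is_TAA_morphism (fun I d x => psi I d (phi I d x)).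
Proof.
move=> hp hq; split; [|split; [|split]].
- by move=> I d a x y; rewrite (phiL hp) (phiL hq).
- by move=> I J d f bf x; rewrite (phi_rel hp) // (phi_rel hq).
- by move=> I J d e x y; rewrite (phi_mul hp) (phi_mul hq).
- by rewrite (phi_one hp) (phi_one hq).
Qed.

Lemma morph_id (K : fieldType) (A : TAA K) :
  is_TAA_morphism (fun I d (x : taa_sp A I d) => x).
Proof. by split; [|split; [|split]]. Qed.
Ltac show := match goal with |- ?g => idtac g end.

Lemma zlem1 (V : zmodType) (X : V) : 0 - X + (X - 0) = 0.
Proof. by rewrite sub0r subr0 addNr. Qed.

Lemma zlem2 (V : zmodType) (a1 a2 b1 b2 c1 c2 : V) : 0 - a1 - (a2 - b2) = 0 -> b1 - c1 - (c2 - 0) = 0 -> a1 - b1 - (0 - c1) + (a2 - b2 - (0 - c2)) = 0.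
Proof.
move/eqP; rewrite sub0r -opprD oppr_eq0 => /eqP h1.
move/eqP; rewrite subr0 subr_eq0 => /eqP h2.
rewrite !sub0r !opprK -h2 addrACA [c1 + _]addrC subrK addrAC subrK //.
Qed.

Section BV.
Variables (K : fieldType) (B : TAA K) (HB : is_TAA B).
Variables (D : taa_sp B void 1) (m : taa_sp B unit 0).
Hypothesis hR : relsBV D m.
Local Hint Resolve HB : core.
Local Hint Extern 0 (bijective _) => bijtac : core.
Local Notation rel := (taa_rel B).
Local Notation mul := (taa_mul B).

Definition lB := rel (@void_l unit) (tcomm D m).

Lemma lB_spec : tcomm D m = rel (@inr void unit) lB.
Proof.
rewrite /lB rel_comp //; try bijtac.
by rewrite (@rel_ext _ _ _ _ _ _ id) ?rel_id //; case=> [[]|[]].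
Qed.

Lemma lB_m : tcomm lB m = 0.
Proof.
case: hR => _ _ h3.
rewrite /lB tcomm_rel_l //.
by rewrite [tcomm _ m](_ : _ = 0) ?rel0.
Qed.

Lemma D_lB : tcomm D lB = 0.
Proof.
case: hR => hDD _ _.
rewrite tcomm_od // dcastE /lB tcomm_ev // dcastE.
rewrite !(mul_rel_r, mul_rel_l, tmulBr, tmulBl, relB, assocR, dcastE) //.
rewrite !(mul_rel_r, mul_rel_l, tmulBr, tmulBl, relB, assocR, dcastE, rel_comp) //.
norm HB.
have dd : forall (I : finType) d (x : taa_sp B I d), mul (mul x D) D = 0.
  by move=> I d x; rewrite (assocL HB x D D) hDD; norm HB.
rewrite hDD.
repeat match goal with |- context [taa_mul _ (taa_mul _ ?x D) D] => rewrite (dd _ _ x) end.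
norm HB. merge_rel.
rewrite /reverse_coercion. merge_rel. by apply: zlem1.
Qed.
Lemma lB_lB : tcomm lB lB = 0.
Proof.
case: hR => hDD _ h3.
have dd : forall (I : finType) d (x : taa_sp B I d), mul (mul x D) D = 0.
  by move=> I d x; rewrite (assocL HB x D D) hDD; norm HB.
have E1 : rel (sumf (@void_l unit) (@id unit) \o @void_l _) (mul D (tcomm (tcomm D m) m)) = 0.
  by rewrite h3; norm HB.
have E2 : rel (sumf (@void_l unit) (@id unit) \o @void_r _) (mul (tcomm (tcomm D m) m) D) = 0.
  by rewrite h3; norm HB.
move: E1 E2.
rewrite [tcomm lB lB]tcomm_od // dcastE.
rewrite /lB !tcomm_ev // !dcastE /reverse_coercion.
norm HB.
rewrite hDD.
repeat match goal with |- context [taa_mul _ (taa_mul _ ?x D) D] => rewrite (dd _ _ x) end.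
norm HB. rewrite /reverse_coercion. merge_rel.
by apply: zlem2.
Qed.
Lemma rels1_BV : rels1 D m lB.
Proof.
case: hR => hDD hmm _.
split; first done. split; first done. split; first exact: lB_spec.
split; first exact: D_lB. split; first exact: lB_m. exact: lB_lB.
Qed.
End BV.

Lemma relsBV_A (K : fieldType) (A : TAA K) (HA : is_TAA A)
  (D : taa_sp A void 1) (m : taa_sp A unit 0) (l : taa_sp A unit 1) :
  rels1 D m l -> relsBV D m.
Proof.
case=> h1 [h2 [h3 [h4 [h5 h6]]]]; split => //.
rewrite h3 (@tcomm_rel_l _ _ HA _ _ _ _ _ inr l m); last by bijtac.
by rewrite h5 rel0 //; bijtac.
Qed.


Theorem mainTheorem8 (K : fieldType) (charK0 : [pchar K] =i pred0)
  (A : TAA K) (D : taa_sp A void 1) (m : taa_sp A unit 0) (l : taa_sp A unit 1)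
  (presA : presented1 D m l)
  (tBV : TAA K) (D' : taa_sp tBV void 1) (m' : taa_sp tBV unit 0)
  (presB : presentedBV D' m') :
  TAA_isomorphic A tBV.
Proof.
case: presA => HA [r1 UA]; case: presB => HB [rB UB].
have rB1 := rels1_BV HB rB.
have rA := relsBV_A HA r1.
have [phi [hphi phD phm phl uphi]] := UA tBV D' m' (lB D' m') HB rB1.
have [psi [hpsi psD psm upsi]] := UB A D m HA rA.
exists phi, psi; split; first done; split; first done; split.
- have [c0 [hc0 c0D c0m c0l uc0]] := UA A D m l HA r1.
  move=> I d x.
  rewrite (uc0 (fun I d x => psi I d (phi I d x))); last first.
  + rewrite phl /lB (phi_rel hpsi); last by bijtac.
    rewrite (phi_tcomm hpsi D' m') psD psm.
    case: r1 => _ [_ [h3 _]].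
    rewrite h3 (rel_comp HA); try bijtac.
    by rewrite (@rel_ext _ _ _ _ _ _ id) ?rel_id //; case.
  + by rewrite phm psm.
  + by rewrite phD psD.
  + exact: morph_comp.
  by symmetry; apply: (uc0 (fun I d x => x)) => //; exact: morph_id.
- have [c0 [hc0 c0D c0m uc0]] := UB tBV D' m' HB rB.
  move=> I d x.
  rewrite (uc0 (fun I d x => phi I d (psi I d x))); last first.
  + by rewrite psm phm.
  + by rewrite psD phD.
  + exact: morph_comp.
  by symmetry; apply: (uc0 (fun I d x => x)) => //; exact: morph_id.
Qed.
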